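(* Let $T$ be a tree in which every non-leaf vertex has degree 3, and let $S_{in}\uplus S_{out}$ be a partition of the set of leaves of $T$. If $|S_{out}|$ is odd, then $T$ has an independent set $S$ with $S_{in}\subseteq S$ and $S\cap S_{out}=\emptyset$ such that each component of $T-S$ contains at most one leaf of $T$.
   Context: A leaf of $T$ is a vertex of degree at most 1 in $T$ (so a one-vertex tree has its vertex as a leaf). *)

(* Defs.v *)
From mathcomp Require Import all_boot.
Set Implicit Arguments. Unset Strict Implicit. Unset Printing Implicit Defensive.

Section Graphs.
Variable V : finType.

Definition simple_graph (e : rel V) : Prop := symmetric e /\ irreflexive e.

Definition has_cycle (e : rel V) : Prop :=
  exists c : seq V, 3 <= size c /\ ucycle e c.

Definition is_tree (e : rel V) : Prop :=
  [/\ simple_graph e, 0 < #|V|, (forall x y : V, connect e x y) & ~ has_cycle e].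

Definition deg (e : rel V) (x : V) : nat := #|[set y | e x y]|.

Definition leaves (e : rel V) : {set V} := [set x | deg e x <= 1].

Definition independent (e : rel V) (S : {set V}) : Prop :=
  forall x y, x \in S -> y \in S -> ~~ e x y.

Definition del_rel (e : rel V) (S : {set V}) : rel V :=
  fun x y => [&& e x y, x \notin S & y \notin S].

End Graphs.

(* Main.v *)
Require Import Defs.
From mathcomp Require Import all_boot.
Set Implicit Arguments. Unset Strict Implicit. Unset Printing Implicit Defensive.

Section Tree.
Variables (V : finType) (e : rel V).
Hypothesis esym : symmetric e.
Hypothesis eirr : irreflexive e.
Hypothesis econn : forall x y, connect e x y.
Hypothesis eacyc : ~ has_cycle e.
Implicit Types (S : {set V}).

Definition D u := del_rel e [set u].
Definition side u w := [set z | connect (D u) w z].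

Lemma del_sym S : symmetric (del_rel e S).
Proof. by move=> x y; rewrite /del_rel esym; case: (x \in S); case: (y \in S); rewrite ?andbF. Qed.

Lemma del_sub S : subrel (del_rel e S) e.
Proof. by move=> x y /and3P[]. Qed.

Lemma del_path_notin S x p : path (del_rel e S) x p -> all (fun v => v \notin S) p.
Proof.
elim: p x => //= y p IH x /andP[/and3P[_ _ ->] /IH ->]. by [].
Qed.

Lemma lift_path S x p : path e x p -> all (fun v => v \notin S) (x :: p) ->
  path (del_rel e S) x p.
Proof.
elim: p x => //= y p IH x /andP[exy pp] /and3P[xS yS al].
rewrite /del_rel exy xS yS /=. apply: IH => //=. by rewrite yS.
Qed.

Lemma connect_del S x y : connect (del_rel e S) x y -> x \notin S -> y \notin S.
Proof.
move=> /connectP[p pp ->] xS.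
have := mem_last x p; rewrite inE => /orP[/eqP -> //|].
by move/(allP (del_path_notin pp)).
Qed.

Lemma U u w1 w2 : e u w1 -> e u w2 -> connect (D u) w1 w2 -> w1 = w2.
Proof.
move=> e1 e2 /connectP[p pp E].
case: (shortenP pp) E => p' pp' up' _ E; subst w2.
apply/eqP; apply/negPn/negP => ne.
apply: eacyc; exists (u :: w1 :: p'); split.
  move: ne; clear; case: p' => [|z q] /=; first by rewrite eqxx.
  by [].
rewrite /ucycle /= rcons_path e1 (sub_path (@del_sub _) pp') /= esym e2 /=.
have := del_path_notin pp'.
move: up'; rewrite /= => /andP[w1p' ->]; rewrite andbT => al.
rewrite inE negb_or w1p' ?andbT; apply/andP; split.
  by apply/negP => /eqP E; move: e1; rewrite E eirr.
apply/negP => up; by move: (allP al u up); rewrite inE eqxx.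
Qed.

Lemma B1g S u z : connect (del_rel e S) u z -> z != u ->
  exists2 w1, del_rel e S u w1 & connect (D u) w1 z.
Proof.
move=> /connectP[p pp ->] ne.
case: (shortenP pp) ne => p' pp' up' _.
case: p' pp' up' => [|w q] /=; first by rewrite eqxx.
move=> /andP[uw pq] /and3P[]; rewrite inE negb_or => /andP[uw' uq] wq uq2 _.
exists w => //. apply/connectP; exists q => //.
apply: lift_path; first exact: (sub_path (@del_sub _) pq).
rewrite /= !inE eq_sym uw' /=.
apply/allP => v vq; rewrite inE; apply/negP => /eqP E; by rewrite -E vq in uq.
Qed.

Lemma B1 u z : z != u -> exists2 w, e u w & z \in side u w.
Proof.
move=> ne.
have : connect (del_rel e set0) u z.
  by rewrite (@eq_connect _ _ e) // => x y; rewrite /del_rel !inE !andbT.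
move=> /B1g /(_ ne) [w uw cw]; exists w; first exact: del_sub uw.
by rewrite inE.
Qed.

Lemma B2 u w1 w2 z : e u w1 -> e u w2 -> z \in side u w1 -> z \in side u w2 -> w1 = w2.
Proof.
move=> e1 e2; rewrite !inE => c1 c2; apply: (U e1 e2).
apply: connect_trans c1 _. by rewrite (sym_connect_sym (@del_sym _)).
Qed.

Lemma side_notin u w z : e u w -> z \in side u w -> z != u.
Proof.
move=> euw; rewrite inE => /connect_del; rewrite !inE; apply.
by apply/negP => /eqP E; move: euw; rewrite E eirr.
Qed.

Lemma A u w : e u w -> side w u = ~: side u w.
Proof.
move=> euw; have wu : w != u by apply/negP => /eqP E; move: euw; rewrite E eirr.
apply/setP => z; rewrite !inE.
case cz: (connect (D u) w z) => /=.
  apply/negP => cz'.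
  have zw : z != w.
    apply/negP => /eqP E; move: cz'; rewrite E => /connect_del.
    by rewrite !inE eqxx eq_sym wu => /(_ isT).
  have zu : z != u by apply: (side_notin euw); rewrite inE.
  case: (B1g cz' zu) => w1 /and3P[uw1 _ w1w] c1.
  have := (@B2 u w1 w z uw1 euw); rewrite !inE => /(_ c1 cz) E.
  by move: w1w; rewrite E !inE eqxx.
case: (eqVneq z u) => [->|zu]; first exact: connect0.
case: (B1 zu) => w1 uw1 z1.
have w1w : w1 != w by apply/negP => /eqP E; move: z1; rewrite E inE cz.
apply: (@connect_trans _ _ w1).
  apply: connect1; rewrite /D /del_rel uw1 !inE eq_sym wu /=. by [].
move: z1; rewrite inE => /connectP[p pp ->].
apply/connectP; exists p => //.
apply: lift_path; first exact: (sub_path (@del_sub _) pp).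
apply/allP => v vp; rewrite inE; apply/negP => /eqP E.
have := path_connect pp vp; rewrite E => cw.
have := (@B2 u w1 w w uw1 euw); rewrite !inE cw connect0 => /(_ isT isT) E'.
by rewrite E' eqxx in w1w.
Qed.


Section Par.
Variable Sout : {set V}.
Hypothesis Hodd : odd #|Sout|.

Definition f u w := odd #|Sout :&: side u w|.

Lemma fA u w : e u w -> f w u = ~~ f u w.
Proof.
move=> euw; rewrite /f (A euw) -setDE.
have H := cardsID (side u w) Sout; move: Hodd; rewrite -H.
by rewrite oddD; case: (odd _); case: (odd _).
Qed.

Lemma leafside x w : e x w -> deg e x <= 1 -> side x w = [set z | z != x].
Proof.
move=> exw H; apply/setP => z; rewrite [RHS]inE; apply/idP/idP.
  exact: side_notin.
move=> zx; case: (B1 zx) => w1 xw1 zs.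
have -> : w = w1 by move/card_le1_eqP: H; apply; rewrite inE.
exact: zs.
Qed.

Lemma fleaf x w : e x w -> deg e x <= 1 -> f x w = (x \notin Sout).
Proof.
move=> exw H; rewrite /f leafside //.
have -> : Sout :&: [set z | z != x] = Sout :\ x.
  by apply/setP => z; rewrite !inE andbC.
move: Hodd; rewrite (cardsD1 x Sout) oddD; case: (x \in Sout) => /=.
  by case: odd.
by case: odd.
Qed.

Lemma card_sum (A B : {set V}) : #|A :&: B| = \sum_(z in A) (z \in B).
Proof.
rewrite -sum1_card big_mkcond [RHS]big_mkcond /=; apply: eq_bigr => z _.
by rewrite inE; case: (z \in A); case: (z \in B).
Qed.

Lemma sum_side u : \sum_(w in [set y | e u y]) #|Sout :&: side u w| = #|Sout :\ u|.
Proof.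
under eq_bigr do rewrite card_sum.
rewrite exchange_big /= setDE card_sum; apply: eq_bigr => z zS; rewrite !inE.
case: (eqVneq z u) => [->|zu] /=.
  rewrite big1 // => w; rewrite inE => uw.
  suff /negbTE -> : u \notin side u w by [].
  by apply/negP => /(side_notin uw); rewrite eqxx.
case: (B1 zu) => w0 uw0 zs.
rewrite (bigD1 w0) /=; last by rewrite inE.
rewrite zs big1 // => w /andP[]; rewrite inE => uw ne.
suff /negbTE -> : z \notin side u w by [].
apply/negP => zw. by rewrite (B2 uw uw0 zw zs) eqxx in ne.
Qed.

Lemma deg3 u a c w : deg e u = 3 -> e u a -> e u c -> e u w ->
  a != c -> a != w -> c != w ->
  #|Sout :\ u| = #|Sout :&: side u a| + #|Sout :&: side u c| + #|Sout :&: side u w|.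
Proof.
move=> d3 ua uc uw ac aw cw; rewrite -sum_side.
have -> : [set y | e u y] = a |: (c |: [set w]).
  apply/eqP; rewrite eq_sym eqEcard; apply/andP; split.
    by apply/subsetP => z; rewrite !inE => /or3P[]/eqP->.
  move: d3; rewrite /deg => ->.
  by rewrite !cardsU1 cards1 !inE negb_or ac aw cw.
rewrite big_setU1 ?big_setU1 ?big_set1 /= ?addnA // !inE ?negb_or ?ac ?aw ?cw //.
Qed.


Variable Sin : {set V}.
Hypothesis Hdeg : forall x : V, x \notin leaves e -> deg e x = 3.
Hypothesis Hdisj : Sin :&: Sout = set0.
Hypothesis Hcov : Sin :|: Sout = leaves e.

Definition SS := [set v | (v \notin Sout) && [forall w, e v w ==> f v w]].

Lemma Sout_leaf x : x \in Sout -> x \in leaves e.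
Proof. by move=> xo; rewrite -Hcov inE xo orbT. Qed.

Lemma Sin_notout x : x \in Sin -> x \notin Sout.
Proof.
move=> xi; apply/negP => xo.
by have := in_set0 x; rewrite -Hdisj inE xi xo.
Qed.

Lemma Sin_SS : Sin \subset SS.
Proof.
apply/subsetP => x xi; rewrite inE Sin_notout //=.
have xl : x \in leaves e by rewrite -Hcov inE xi.
apply/forallP => w; apply/implyP => xw.
by rewrite fleaf // ?Sin_notout //; rewrite inE in xl.
Qed.

Lemma S_leaf x : x \in leaves e -> x \notin SS -> x \in Sout.
Proof.
rewrite -Hcov inE => /orP[xi|//] /negP[].
exact: (subsetP Sin_SS).
Qed.

Lemma walk rest : forall a b, del_rel e SS a b -> ~~ f a b ->
  path (del_rel e SS) b rest -> uniq (a :: b :: rest) -> last b rest \in leaves e -> False.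
Proof.
elim: rest => [|c rest IH] a b /and3P[eab aS bS] nf.
  move=> _ _ /= bl; have bo := S_leaf bl bS.
  have := fA eab; rewrite (negbTE nf) /= fleaf ?bo //; first by rewrite esym.
  by rewrite inE in bl.
move=> /= /andP[Rbc pr] Un l.
have ac : a != c.
  by apply/negP => /eqP E; move: Un; rewrite E /= !inE eqxx ?orbT.
move: Un => /andP[_ Ur].
have ebc : e b c by case/and3P: Rbc.
have eba : e b a by rewrite esym.
have bnl : b \notin leaves e.
  rewrite inE /deg -ltnNge.
  have : [set a; c] \subset [set y | e b y].
    by apply/subsetP => z; rewrite !inE => /orP[]/eqP->.
  by move/subset_leq_card; rewrite cards2 ac.
have d3 := Hdeg bnl.
have bo : b \notin Sout by apply/negP => /Sout_leaf; rewrite (negbTE bnl).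
have [w /andP[ebw nfw]] : exists w, e b w && ~~ f b w.
  move: bS; rewrite inE bo /= negb_forall => /existsP[w]; rewrite negb_imply.
  by exists w.
have fba : f b a by rewrite fA // esym.
have nfc : ~~ f b c.
  apply/negP => fbc.
  have wa : a != w by apply/negP => /eqP E; move: nfw; rewrite -E fba.
  have wc : c != w by apply/negP => /eqP E; move: nfw; rewrite -E fbc.
  have := deg3 d3 eba ebc ebw ac wa wc.
  have -> : Sout :\ b = Sout by apply/setP => z; rewrite !inE; case: eqVneq => // ->; rewrite (negbTE bo).
  move=> H; move: Hodd; rewrite H !oddD.
  by move: fba fbc nfw; rewrite /f => -> -> /negbTE ->.
exact: (IH b c Rbc nfc pr Ur l).
Qed.

End Par.
End Tree.

Theorem lemma4p32 (V : finType) (e : rel V) (Sin Sout : {set V}) :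
  is_tree e ->
  (forall x : V, x \notin leaves e -> deg e x = 3) ->
  Sin :&: Sout = set0 ->
  Sin :|: Sout = leaves e ->
  odd #|Sout| ->
  exists S : {set V},
    [/\ independent e S, Sin \subset S, S :&: Sout = set0 &
        forall x y : V, x \in leaves e -> y \in leaves e ->
          x \notin S -> y \notin S -> connect (del_rel e S) x y -> x = y].
Proof.
move=> [[esym eirr] _ econn eacyc] Hdeg Hdisj Hcov Hodd.
exists (SS e Sout); split.
- move=> x y; rewrite !inE => /andP[_ /forallP Hx] /andP[_ /forallP Hy].
  apply/negP => exy.
  have := Hx y; rewrite exy /= => fxy.
  have := Hy x; rewrite esym exy /= (fA esym eirr econn eacyc Hodd exy) fxy.
  by [].
- exact: (Sin_SS eirr econn Hodd Hdisj Hcov).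
- by apply/setP => v; rewrite !inE; case: (v \in Sout); rewrite ?andbF.
move=> x y xl yl xS yS /connectP[p pp E].
case: (shortenP pp) E => p' pp' up' _ E; subst y.
case: p' pp' up' yl yS => [//|b rest] /= /andP[Rxb pr] Un yl yS.
have xo := S_leaf eirr econn Hodd Hdisj Hcov xl xS.
have exb : e x b by case/and3P: Rxb.
have nf : ~~ f e Sout x b.
  by rewrite (fleaf eirr econn Hodd exb) ?xo //; rewrite inE in xl.
by case: (walk esym eirr econn eacyc Hodd Hdeg Hdisj Hcov Rxb nf pr Un yl).
Qed.
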